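(* Let $k:\mathcal{Z}\times\mathcal{Z}\to\mathbb{R}$ be a positive definite kernel with polynomial eigendecay on a $d$-dimensional hypercube $\mathcal{Z}$ of side length $\rho_{\mathcal{Z}}$, and let $\lambda>0$. Then the maximum information gain satisfies $$\Gamma_{k,\lambda}(T)=\mathcal{O}\!\left(T^{\frac1{\tilde p}}(\log T)^{1-\frac1{\tilde p}}\rho_{\mathcal{Z}}^{\frac{\alpha}{\tilde p}}\right),$$ with hidden constants depending on the kernel constants and $\lambda$ but not on $T$ or $\rho_{\mathcal{Z}}$.
   Context: $k$ is continuous with $k(z,z)\le1$. Let $\{(\sigma_m,\phi_m)\}_{m\ge1}$ be the Mercer eigenvalue–eigenfunction pairs of $k$ on $\mathcal{Z}$ with respect to Lebesgue measure, eigenvalues decreasing, so that $k(z,z')=\sum_m\sigma_m\phi_m(z)\phi_m(z')$. Polynomial eigendecay means: there are $C_p,\alpha>0$ and $p>1$ with $\sigma_m\le C_pm^{-p}\rho_{\mathcal{Z}}^{\alpha}$ for all $m\in\mathbb{N}$, and there is $\eta\ge0$ such that $m^{-p\eta}\phi_m(z)$ is uniformly bounded over all $m$ and $z$. Write $\tilde p=p(1-2\eta)$. The maximum information gain is $\Gamma_{k,\lambda}(t)=\max_{Z^t\subset\mathcal{Z},|Z^t|=t}\frac12\log\det(I+\lambda^{-2}K_{Z^t})$, where $K_{Z^t}=[k(z,z')]_{z,z'\in Z^t}$. *)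

(* Defs.v *)
From HB Require Import structures.
From mathcomp Require Import all_boot all_order all_algebra.
From mathcomp Require Import all_classical all_reals all_analysis.
Set Implicit Arguments. Unset Strict Implicit. Unset Printing Implicit Defensive.
Import Order.TTheory GRing.Theory Num.Theory.
Import numFieldNormedType.Exports.
Local Open Scope classical_set_scope.
Local Open Scope ring_scope.

Section Defs.
Variables (R : realType) (d : nat).

Notation pt := 'rV[R]_d.

Definition hypercube (a : pt) (rho : R) : set pt :=
  [set z | forall i : 'I_d, a 0 i <= z 0 i <= a 0 i + rho].

Definition rv_upd (x : pt) (i : 'I_d) (t : R) : pt :=
  \row_j (if j == i then t else x 0 j).

Fixpoint iter_int (a : pt) (rho : R) (s : seq 'I_d) (f : pt -> R) (x : pt) : R :=
  match s with
  | [::] => f x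
  | i :: s' => Rintegral lebesgue_measure `[a 0 i, a 0 i + rho]%classic
                 (fun t => iter_int a rho s' f (rv_upd x i t))
  end.

(* Lebesgue integral over the hypercube (as an iterated integral; all
   integrands used below are continuous on the cube, so this agrees with the
   d-dimensional Lebesgue integral by Fubini) *)
Definition cube_integral (a : pt) (rho : R) (f : pt -> R) : R :=
  iter_int a rho (enum 'I_d) f a.

Definition pos_def_kernel (Z : set pt) (k : pt -> pt -> R) : Prop :=
  (forall z z', Z z -> Z z' -> k z z' = k z' z) /\
  (forall (n : nat) (zs : 'I_n -> pt) (c : 'I_n -> R), (forall i, Z (zs i)) ->
     0 <= \sum_(i < n) \sum_(j < n) c i * c j * k (zs i) (zs j)).

Definition kernel_continuous (Z : set pt) (k : pt -> pt -> R) : Prop :=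
  {within [set zz : pt * pt | Z zz.1 /\ Z zz.2],
     continuous (fun zz : pt * pt => k zz.1 zz.2)}.

(* (sigma m, phi m), m = 0,1,2,... (paper index m+1) are the Mercer
   eigenvalue/eigenfunction pairs of k on the hypercube w.r.t. Lebesgue measure *)
Definition mercer_pairs (a : pt) (rho : R) (k : pt -> pt -> R)
    (sigma : nat -> R) (phi : nat -> pt -> R) : Prop :=
  let Z := hypercube a rho in
  [/\ (forall m, 0 <= sigma m) /\ (forall m, sigma m.+1 <= sigma m),
      (forall m, {within Z, continuous (phi m)}),
      (forall m n, cube_integral a rho (fun z => phi m z * phi n z)
                   = (m == n)%:R),
      (forall m z, Z z ->
         cube_integral a rho (fun z' => k z z' * phi m z') = sigma m * phi m z)
    & (forall z z', Z z -> Z z' ->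
         (fun n => \sum_(m < n) sigma m * phi m z * phi m z') @ \oo --> k z z')].

Definition poly_eigendecay (a : pt) (rho : R) (sigma : nat -> R)
    (phi : nat -> pt -> R) (Cp alpha p eta B : R) : Prop :=
  (forall m, sigma m <= Cp * (m.+1)%:R `^ (- p) * rho `^ alpha) /\
  (forall m z, hypercube a rho z -> `|(m.+1)%:R `^ (- (p * eta)) * phi m z| <= B).

Definition gram (k : pt -> pt -> R) (t : nat) (zs : 'I_t -> pt) : 'M[R]_t :=
  \matrix_(i, j) k (zs i) (zs j).

Definition info_gain (k : pt -> pt -> R) (lambda : R) (t : nat) (zs : 'I_t -> pt) : R :=
  2^-1 * ln (\det (1%:M + lambda ^- 2 *: gram k zs)).

Definition max_info_gain (Z : set pt) (k : pt -> pt -> R) (lambda : R) (t : nat) : R :=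
  sup [set info_gain k lambda zs | zs in
        [set zs : 'I_t -> pt | injective zs /\ forall i, Z (zs i)]].

End Defs.

(* Main.v *)
Require Import Defs.
From HB Require Import structures.
From mathcomp Require Import all_boot all_order all_algebra.
From mathcomp Require Import all_classical all_reals all_analysis.
From mathcomp Require Import ring lra.
Set Implicit Arguments. Unset Strict Implicit. Unset Printing Implicit Defensive.
Import Order.TTheory GRing.Theory Num.Theory.
Import numFieldNormedType.Exports.
Local Open Scope classical_set_scope.
Local Open Scope ring_scope.
Section LA.
Variable R : realFieldType.

Lemma det_rank1 n (c : 'cV[R]_n) (r : 'rV[R]_n) :
  \det (1%:M + c *m r) = 1 + (r *m c) 0 0.
Proof.
pose X := block_mx (1%:M : 'M[R]_n) c (- r) (1%:M : 'M[R]_1).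
have E1 : X = block_mx 1%:M 0 (- r) 1%:M *m block_mx 1%:M c 0 (1%:M + r *m c).
  rewrite mulmx_block ?mul1mx ?mul0mx ?mulmx0 ?addr0 ?add0r ?mulmx1 ?mulNmx.
  by rewrite addrCA addNr addr0.
have E2 : X = block_mx (1%:M + c *m r) c 0 1%:M *m block_mx 1%:M 0 (- r) 1%:M.
  rewrite mulmx_block ?mul1mx ?mul0mx ?mulmx0 ?addr0 ?add0r ?mulmx1 ?mulmxN.
  by rewrite addrK.
have := congr1 determinant E1; rewrite {1}E2 !det_mulmx.
rewrite !det_ublock !det_lblock !det1 !mul1r !mulr1 => ->; rewrite det_mx11.
by rewrite !mxE eqxx.
Qed.

Lemma sq_ge0 n (y : 'rV[R]_n) : 0 <= (y *m (trmx y)) 0 0.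
Proof. rewrite mxE; apply: sumr_ge0 => i _; rewrite mxE -expr2; exact: sqr_ge0. Qed.

Lemma mxE00 (A B : 'M[R]_1) : (A + B) 0 0 = A 0 0 + B 0 0.
Proof. by rewrite mxE. Qed.

Lemma mxZ00 (a : R) (A : 'M[R]_1) : (a *: A) 0 0 = a * A 0 0.
Proof. by rewrite mxE. Qed.

Definition psd n (P : 'M[R]_n) := forall x : 'rV[R]_n, 0 <= (x *m P *m (trmx x)) 0 0.

Lemma det_step n (M : 'M[R]_n) (a : R) (r : 'rV[R]_n) :
  (trmx M) = M -> psd (M - 1%:M) -> 0 < \det M -> 0 <= a ->
  0 < \det (M + a *: ((trmx r) *m r)) /\
  \det (M + a *: ((trmx r) *m r)) <= \det M * (1 + a * (r *m (trmx r)) 0 0).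
Proof.
move=> MT Ppsd dM a0.
have Mu : M \in unitmx by rewrite unitmxE unitfE gt_eqF.
set P := M - 1%:M in Ppsd.
have PT : (trmx P) = P by rewrite /P linearB /= MT trmx1.
have MP : M = 1%:M + P by rewrite /P addrC subrK.
clearbody P.
pose w := r *m invmx M.
have rw : r = w *m M by rewrite /w mulmxKV.
have -> : M + a *: ((trmx r) *m r) = M *m (1%:M + (invmx M *m (a *: (trmx r))) *m r).
  by rewrite mulmxDr mulmx1 !mulmxA mulmxV // mul1mx -scalemxAl.
rewrite det_mulmx det_rank1.
set s := (r *m (invmx M *m (a *: (trmx r)))) 0 0.
have rT : (trmx r) = M *m (trmx w) by rewrite -{1}MT -trmx_mul -rw.
have sE : s = a * ((w *m (trmx w)) 0 0 + (w *m P *m (trmx w)) 0 0).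
  rewrite /s -scalemxAr -scalemxAr mxE mulmxA -/w rT.
  by rewrite MP mulmxDl mul1mx mulmxDr mxE mulmxA.
clearbody w.
have s0 : 0 <= s by rewrite sE mulr_ge0 // addr_ge0 // sq_ge0.
split; first by rewrite mulr_gt0 // (lt_le_trans ltr01) // lerDl.
apply: ler_wpM2l; first exact: ltW.
rewrite lerD2l sE; apply: ler_wpM2l => //.
have -> : (r *m (trmx r)) = w *m (trmx w) + w *m P *m (trmx w) + w *m P *m (trmx w) + (w *m P) *m (trmx (w *m P)).
  rewrite {1}rw rT trmx_mul PT MP !mulmxDl !mulmxDr !mul1mx !mulmx1 !mulmxA.
  by rewrite !mulmxDl ?mulmxA !addrA.
have aE (A B : 'M[R]_1) : (A + B) 0 0 = A 0 0 + B 0 0 by rewrite mxE.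
rewrite !aE -!addrA lerD2l lerDl.
apply: addr_ge0; first exact: (Ppsd w).
exact: (sq_ge0 (w *m P)).
Qed.

Lemma psd_add n (A B : 'M[R]_n) : psd A -> psd B -> psd (A + B).
Proof. by move=> hA hB x; rewrite mulmxDr mulmxDl mxE00 addr_ge0. Qed.

Lemma psd_rank1 n (a : R) (r : 'rV[R]_n) : 0 <= a -> psd (a *: ((trmx r) *m r)).
Proof.
move=> a0 x; rewrite -scalemxAr -scalemxAl mxZ00 mulr_ge0 // !mulmxA.
have -> : x *m (trmx r) *m r *m (trmx x) = x *m (trmx r) *m (trmx (x *m (trmx r))).
  by rewrite -mulmxA trmx_mul trmxK.
exact: sq_ge0.
Qed.

Lemma det_iter n (a : nat -> R) (r : nat -> 'rV[R]_n) N : (forall m, 0 <= a m) ->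
  0 < \det (1%:M + \sum_(m < N) a m *: ((trmx (r m)) *m r m)) /\
  \det (1%:M + \sum_(m < N) a m *: ((trmx (r m)) *m r m))
    <= \prod_(m < N) (1 + a m * (r m *m (trmx (r m))) 0 0).
Proof.
move=> a0.
suff : [/\ (trmx (1%:M + \sum_(m < N) a m *: ((trmx (r m)) *m r m)))
              = 1%:M + \sum_(m < N) a m *: ((trmx (r m)) *m r m),
    psd (1%:M + \sum_(m < N) a m *: ((trmx (r m)) *m r m) - 1%:M),
    0 < \det (1%:M + \sum_(m < N) a m *: ((trmx (r m)) *m r m)) &
    \det (1%:M + \sum_(m < N) a m *: ((trmx (r m)) *m r m))
    <= \prod_(m < N) (1 + a m * (r m *m (trmx (r m))) 0 0)] by case.
elim: N => [|N [IT IP ID IB]].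
  rewrite !big_ord0 addr0 trmx1 subrr det1 ltr01; split => //.
  by move=> x; rewrite mulmx0 mul0mx mxE.
rewrite big_ord_recr /= addrA big_ord_recr /=.
have [D1 D2] := det_step (r N) IT IP ID (a0 N).
split => //.
- by rewrite linearD /= IT linearZ /= trmx_mul trmxK.
- have -> : forall (X F : 'M[R]_n), X + F - 1%:M = (X - 1%:M) + F.
    by move=> X F; rewrite addrAC.
  apply: psd_add; first exact: IP.
  exact: psd_rank1.
- apply: (le_trans D2); rewrite ler_wpM2r //.
  by rewrite addr_ge0 ?ler01 // mulr_ge0 // sq_ge0.
Qed.
End LA.
Section AN.
Variable R : realType.

Lemma le_lim_const (f : nat -> R) l b : f @ \oo --> l -> (forall n, f n <= b) -> l <= b.
Proof.
move=> fl fb; rewrite -(cvg_lim _ fl) //; apply: limr_le; first exact: cvgP fl.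
exact: nearW.
Qed.

Lemma ge_lim_ev (f : nat -> R) l b N : f @ \oo --> l ->
  (forall n, (N <= n)%N -> b <= f n) -> b <= l.
Proof.
move=> fl fb; rewrite -(cvg_lim _ fl) //; apply: limr_ge; first exact: cvgP fl.
by exists N.
Qed.

Lemma det_cvg n (A : nat -> 'M[R]_n) (B : 'M[R]_n) :
  (forall i j, (fun N => A N i j) @ \oo --> B i j) ->
  (fun N => \det (A N)) @ \oo --> \det B.
Proof.
move=> hA; rewrite /determinant.
apply: (cvg_big (op := +%R)) => //; first exact: add_continuous.
move=> s _; apply: cvgM; first exact: cvg_cst.
have := @cvg_big R _ *%R 1 xpredT (@mul_continuous R) nat \oo (index_enum 'I_n)
  (fun i N => A N i (perm.fun_of_perm s i)) (fun i => B i (perm.fun_of_perm s i)) _ (fun i _ => hA i (perm.fun_of_perm s i)).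
exact.
Qed.

Lemma powR_exp (x r : R) : 0 < x -> x `^ r = expR (r * ln x).
Proof. by move=> x0; rewrite /powR gt_eqF. Qed.

Lemma tele_step (q : R) (m : nat) : 0 < q -> (0 < m)%N ->
  (m.+1)%:R `^ (-(q+1)) <= (m%:R `^ (-q) - (m.+1)%:R `^ (-q)) / q.
Proof.
move=> q0 m0.
have x0 : 0 < (m%:R : R) by rewrite ltr0n.
have y0 : 0 < (m.+1%:R : R) by rewrite ltr0n.
rewrite !powR_exp // ler_pdivlMr //.
set lx := ln (m%:R : R); set ly := ln (m.+1%:R : R).
have E1 : expR (- q * lx) = expR (- q * ly) * expR (q * (ly - lx)).
  by rewrite -expRD; congr expR; ring.
have E2 : expR (- (q + 1) * ly) = expR (- q * ly) / m.+1%:R.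
  rewrite -[X in _ / X](lnK (x:=m.+1%:R)) ?posrE // -expRN -expRD -/ly.
  by congr expR; ring.
rewrite E1 E2.
suff key : q / m.+1%:R <= expR (q * (ly - lx)) - 1.
  by rewrite mulrAC -mulrA -[X in _ <= _ - X]mulr1 -mulrBr ler_pM2l ?expR_gt0.
have h1 : 1 + q * (ly - lx) <= expR (q * (ly - lx)) by exact: expR_ge1Dx.
suff h2 : 1 / m.+1%:R <= ly - lx.
  have : q * (1 / m.+1%:R) <= q * (ly - lx) by rewrite ler_pM2l.
  rewrite mul1r => h5; apply: le_trans h5 _; rewrite lerBrDr addrC; exact: h1.
have h3 : ln (1 + (- 1 / (m.+1%:R : R))) <= - 1 / (m.+1%:R : R).
  by apply: le_ln1Dx; rewrite mulNr ltrN2 ltr_pdivrMr // mul1r ltr1n ltnS.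
have h4 : 1 + (- 1 / (m.+1%:R : R)) = m%:R / m.+1%:R.
  have yn : (m%:R + 1 : R) != 0 by rewrite -mulrSr pnatr_eq0.
  by rewrite mulrSr; field.
rewrite h4 lnM ?posrE ?invr_gt0 // lnV ?posrE // -/lx -/ly in h3.
by rewrite mulNr in h3; rewrite -opprB lerNr.
Qed.

Lemma tail_bound (q : R) D N : 0 < q -> (0 < D)%N ->
  \sum_(D <= m < N) (m.+1)%:R `^ (-(q+1)) <= D%:R `^ (-q) / q.
Proof.
move=> q0 D0; case: (leqP N D) => hND.
  by rewrite big_geq // divr_ge0 ?powR_ge0 // ltW.
apply: (@le_trans _ _ (\sum_(D <= m < N) (m%:R `^ (-q) - (m.+1)%:R `^ (-q)) / q)).
  apply: ler_sum_nat => m /andP [Dm _]; apply: tele_step => //.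
  exact: leq_trans D0 Dm.
rewrite (@telescope_sumr_eq _ D N (fun m => - (m%:R `^ (-q)) / q)); last 2 first.
- exact: ltnW.
- by move=> k _; rewrite -mulrBl opprK addrC.
have h : 0 <= N%:R `^ (-q) / q by rewrite divr_ge0 ?powR_ge0 // ltW.
move: h; rewrite !mulNr; move: (N%:R `^ _ / q) (D%:R `^ _ / q) => x y; lra.
Qed.

Lemma sum_ln_bound (q H A : R) (u : nat -> R) : 0 < q -> 0 <= H -> 0 <= A ->
  (forall m, 0 <= u m) -> (forall m, u m <= H) ->
  (forall m, u m <= A * (m.+1)%:R `^ (-(q+1))) ->
  forall N, (\sum_(m < N) ln (1 + u m) <= A * (1 + q^-1)) /\
     (forall D, (0 < D)%N -> \sum_(m < N) ln (1 + u m)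
                 <= D%:R * ln (1 + H) + A * (D%:R `^ (-q) / q)).
Proof.
move=> q0 H0 A0 u0 uH uA N.
have lnle m : ln (1 + u m) <= u m by apply: le_ln1Dx; apply: lt_le_trans (u0 m); rewrite ltrN10.
have lnge m : 0 <= ln (1 + u m) by apply: ln_ge0; rewrite lerDl.
split.
  apply: (@le_trans _ _ (\sum_(m < N) A * (m.+1)%:R `^ (-(q+1)))).
    by apply: ler_sum => m _; apply: le_trans (lnle m) (uA m).
  rewrite -mulr_sumr; apply: ler_wpM2l => //.
  rewrite -(big_mkord xpredT (fun m => (m.+1)%:R `^ (-(q+1)))).
  case: N => [|N]; first by rewrite big_geq // addr_ge0 // invr_ge0 ltW.
  rewrite big_ltn // /= powR1 lerD2l.
  apply: le_trans (tail_bound N.+1 q0 (isT : (0 < 1)%N)) _.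
  by rewrite powR1 mul1r.
move=> D D0.
have -> : \sum_(m < N) ln (1 + u m) = \sum_(0 <= m < N) ln (1 + u m) by rewrite big_mkord.
apply: (@le_trans _ _ (\sum_(0 <= m < D + N) ln (1 + u m))).
  rewrite (big_cat_nat (leq0n N) (leq_addl D N)) /=.
  by rewrite lerDl sumr_ge0.
rewrite (big_cat_nat (leq0n D) (leq_addr N D)) /=.
apply: lerD.
  apply: (@le_trans _ _ (\sum_(0 <= m < D) ln (1 + H))).
    apply: ler_sum_nat => m _.
    have p1 : 0 < 1 + u m by rewrite ltr_pwDl ?ltr01.
    have p2 : 0 < 1 + H by rewrite ltr_pwDl ?ltr01.
    by rewrite ler_ln ?posrE // lerD2l.
  by rewrite sumr_const_nat subn0 mulr_natl.
apply: (@le_trans _ _ (\sum_(D <= m < D + N) A * (m.+1)%:R `^ (-(q+1)))).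
  by apply: ler_sum_nat => m _; apply: le_trans (lnle m) (uA m).
rewrite -mulr_sumr; apply: ler_wpM2l => //; exact: tail_bound.
Qed.
End AN.

Section INFO.
Variable R : realType.

Lemma info_le (d T : nat) (k : 'rV[R]_d -> 'rV[R]_d -> R) (sigma : nat -> R)
  (phi : nat -> 'rV[R]_d -> R) (lambda S : R) (zs : 'I_T -> 'rV[R]_d) :
  (forall m, 0 <= sigma m) ->
  (forall i j, (fun n => \sum_(m < n) sigma m * phi m (zs i) * phi m (zs j))
                 @ \oo --> k (zs i) (zs j)) ->
  (forall N, \sum_(m < N) ln (1 + lambda ^- 2 * sigma m * \sum_(i < T) phi m (zs i) ^+ 2) <= S) ->
  info_gain k lambda zs <= 2^-1 * S.
Proof.
move=> s0 hk hS.
pose a m := lambda ^- 2 * sigma m.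
pose r m := \row_(i < T) phi m (zs i).
pose Mn N := 1%:M + \sum_(m < N) a m *: ((trmx (r m)) *m r m).
have a0 m : 0 <= a m by rewrite /a mulr_ge0 // invr_ge0 sqr_ge0.
have uE m : a m * (r m *m (trmx (r m))) 0 0 = lambda ^- 2 * sigma m * \sum_(i < T) phi m (zs i) ^+ 2.
  rewrite mxE /a; congr (_ * _); apply: eq_bigr => i _; by rewrite !mxE expr2.
have S0 : 0 <= S by have := hS 0%N; rewrite big_ord0.
have detle N : \det (Mn N) <= expR S.
  have [_ h] := det_iter r N a0.
  apply: (le_trans h).
  have upos m : 0 < 1 + a m * (r m *m (trmx (r m))) 0 0.
    by rewrite ltr_pwDl ?ltr01 // mulr_ge0 // sq_ge0.
  have -> : \prod_(m < N) (1 + a m * (r m *m (trmx (r m))) 0 0)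
      = expR (\sum_(m < N) ln (1 + a m * (r m *m (trmx (r m))) 0 0)).
    by rewrite expR_sum; apply: eq_bigr => m _; rewrite lnK // posrE.
  rewrite ler_expR; under eq_bigr do rewrite uE; exact: hS.
have Mcvg : (fun N => \det (Mn N)) @ \oo --> \det (1%:M + lambda ^- 2 *: gram k zs).
  apply: det_cvg => i j.
  have -> : (1%:M + lambda ^- 2 *: gram k zs) i j = (1%:M : 'M[R]_T) i j + lambda ^- 2 * k (zs i) (zs j).
    by rewrite !mxE.
  have EM N : Mn N i j = (1%:M : 'M[R]_T) i j + lambda ^- 2 * \sum_(m < N) sigma m * phi m (zs i) * phi m (zs j).
    rewrite /Mn [LHS]mxE summxE mulr_sumr; congr (_ + _); apply: eq_bigr => m _.
    rewrite !mxE big_ord1 !mxE /a; ring.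
  under eq_cvg do rewrite EM.
  apply: cvgD; first exact: cvg_cst.
  apply: cvgM; first exact: cvg_cst.
  exact: hk.
have dle := le_lim_const Mcvg detle.
rewrite /info_gain ler_pM2l ?invr_gt0 ?ltr0n //.
case: (leP (\det (1%:M + lambda ^- 2 *: gram k zs)) 0) => hd.
  by rewrite ln0.
by rewrite -ler_expR lnK ?posrE.
Qed.
End INFO.

Lemma eqle (R : realType) (x y : R) : x = y -> x <= y.
Proof. by move->. Qed.

Lemma powRD_pos (R : realType) (x r s : R) : 0 < x -> x `^ (r + s) = x `^ r * x `^ s.
Proof. by move=> x0; rewrite powRD // (gt_eqF x0) implybT. Qed.

Lemma sq_le_abs (R : realType) (x B : R) : `|x| <= B -> x ^+ 2 <= B ^+ 2.
Proof.
move=> h; rewrite -(real_normK (num_real x)) !expr2.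
by apply: ler_pM => //; exact: normr_ge0.
Qed.

Theorem lemma2 (R : realType) (d : nat) (Cp alpha p eta B lambda : R) :
  (0 < d)%N -> 0 < Cp -> 0 < alpha -> 1 < p -> 0 <= eta ->
  1 < p * (1 - 2 * eta) -> 0 < lambda ->
  exists (C : R) (T0 : nat),
    forall (a : 'rV[R]_d) (rho : R) (k : 'rV[R]_d -> 'rV[R]_d -> R)
           (sigma : nat -> R) (phi : nat -> 'rV[R]_d -> R),
      0 < rho ->
      pos_def_kernel (hypercube a rho) k ->
      kernel_continuous (hypercube a rho) k ->
      (forall z, hypercube a rho z -> k z z <= 1) ->
      mercer_pairs a rho k sigma phi ->
      poly_eigendecay a rho sigma phi Cp alpha p eta B ->
      forall T : nat, (T0 <= T)%N ->
        max_info_gain (hypercube a rho) k lambda T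
        <= C * T%:R `^ (1 / (p * (1 - 2 * eta)))
             * (ln T%:R) `^ (1 - 1 / (p * (1 - 2 * eta)))
             * rho `^ (alpha / (p * (1 - 2 * eta))).
Proof.
move=> d0 Cp0 al0 p1 eta0 P1 lam0.
set P := p * (1 - 2 * eta) in P1 *.
set q := P - 1.
have q0 : 0 < q by rewrite /q subr_gt0.
have qP : q + 1 = P by rewrite /q subrK.
have P0 : 0 < P by apply: lt_trans P1; exact: ltr01.
set L0 := lambda ^- 2.
have L00 : 0 < L0 by rewrite /L0 invr_gt0 exprn_gt0.
set c := Cp * B ^+ 2.
have c0 : 0 <= c by rewrite /c mulr_ge0 ?sqr_ge0 // ltW.
set C := 4 + L0 * c * (1 + q^-1).
have C0 : 0 <= C.
  apply: addr_ge0 => //; apply: mulr_ge0; first by apply: mulr_ge0 => //; exact: ltW.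
  by apply: addr_ge0 => //; rewrite invr_ge0 ltW.
exists C, (Num.truncn (1 + L0)).+2.
move=> a rho k sigma phi rho0 kpd kc kd1 mer dec T hT.
case: mer => [[sig0 sigdec] phicont orth eig mconv].
case: dec => [sigb phib].
set Rr := rho `^ alpha.
have Rr0 : 0 < Rr by rewrite /Rr powR_gt0.
have T2 : (2 <= T)%N by apply: leq_trans hT.
have TgtL0 : 1 + L0 <= T%:R.
  apply: (le_trans (ltW (truncnS_gt (1 + L0)))).
  by rewrite ler_nat; apply: leq_trans hT.
have Tpos : 0 < (T%:R : R) by rewrite ltr0n; apply: leq_trans T2.
have Lpos : 0 < ln (T%:R : R) by apply: ln_gt0; rewrite ltr1n.
set L := ln (T%:R : R).
set TR := T%:R * Rr.
have TR0 : 0 < TR by rewrite mulr_gt0.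
set Y := TR `^ (1 / P) * L `^ (1 - 1 / P).
have Y0 : 0 <= Y by rewrite mulr_ge0 ?powR_ge0.
have RHS : C * T%:R `^ (1 / P) * L `^ (1 - 1 / P) * rho `^ (alpha / P) = C * Y.
  have -> : alpha / P = alpha * (1 / P) by rewrite mul1r.
  rewrite powRrM /Y /TR powRM ?ltW // -/Rr; ring.
rewrite RHS.
have key : forall zs : 'I_T -> 'rV[R]_d, (forall i, hypercube a rho (zs i)) ->
  forall N, \sum_(m < N) ln (1 + L0 * sigma m * \sum_(i < T) phi m (zs i) ^+ 2) <= 2 * C * Y.
  move=> zs hz N.
  have termle m z : hypercube a rho z -> sigma m * phi m z ^+ 2 <= 1.
    move=> hzz; apply: le_trans (kd1 z hzz).
    apply: (@ge_lim_ev _ _ _ _ m.+1 (mconv z z hzz hzz)) => n hn.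
    rewrite (bigD1 (Ordinal hn)) //= expr2 mulrA lerDl.
    apply: sumr_ge0 => j _; rewrite -mulrA mulr_ge0 // -expr2; exact: sqr_ge0.
  have termle2 m z : hypercube a rho z -> sigma m * phi m z ^+ 2 <= c * Rr * (m.+1)%:R `^ (-P).
    move=> hzz.
    set w : R := (m.+1)%:R.
    have w0 : 0 < w by rewrite ltr0n.
    have h1 := sigb m.
    have h2 := phib m z hzz.
    set e := w `^ (p * eta).
    have e0 : 0 < e by rewrite powR_gt0.
    rewrite -/w powRN -/e in h2.
    have phi2 : phi m z ^+ 2 <= e ^+ 2 * B ^+ 2.
      have -> : phi m z ^+ 2 = e ^+ 2 * (e^-1 * phi m z) ^+ 2.
        by field; rewrite gt_eqF.
      by rewrite ler_wpM2l ?sqr_ge0 // sq_le_abs.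
    apply: (le_trans (ler_pM (sig0 m) (sqr_ge0 _) h1 phi2)).
    have -> : w `^ (- P) = w `^ (- p) * e ^+ 2.
      have hPe : - P = - p + (p * eta + p * eta) by rewrite /P; ring.
      by rewrite hPe /e expr2 -!powRD_pos.
    rewrite /c /Rr -/w; apply: eqle; ring.
  have uE m : L0 * sigma m * \sum_(i < T) phi m (zs i) ^+ 2
      = L0 * \sum_(i < T) sigma m * phi m (zs i) ^+ 2 by rewrite -mulrA mulr_sumr.
  have u0 m : 0 <= L0 * sigma m * \sum_(i < T) phi m (zs i) ^+ 2.
    apply: mulr_ge0; first by rewrite mulr_ge0 // ltW.
    by apply: sumr_ge0 => i _; exact: sqr_ge0.
  have uH m : L0 * sigma m * \sum_(i < T) phi m (zs i) ^+ 2 <= L0 * T%:R.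
    rewrite uE ler_pM2l //.
    apply: le_trans (ler_sum _ (fun i _ => termle m _ (hz i))) _.
    by rewrite sumr_const card_ord.
  have uA m : L0 * sigma m * \sum_(i < T) phi m (zs i) ^+ 2
      <= (L0 * T%:R * c * Rr) * (m.+1)%:R `^ (-(q + 1)).
    rewrite qP uE.
    apply: le_trans (ler_wpM2l (ltW L00) (ler_sum _ (fun i _ => termle2 m _ (hz i)))) _.
    by rewrite sumr_const card_ord -mulr_natl; apply: eqle; ring.
  have A0 : 0 <= L0 * T%:R * c * Rr.
    by apply: mulr_ge0; [apply: mulr_ge0; [apply: mulr_ge0; exact: ltW|exact: c0] | exact: ltW].
  have [ha hb] := sum_ln_bound q0 (mulr_ge0 (ltW L00) (ltW Tpos)) A0 u0 uH uA N.
  set K := L0 * c * (1 + q^-1).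
  have K0 : 0 <= K.
    apply: mulr_ge0; first by apply: mulr_ge0 => //; exact: ltW.
    by apply: addr_ge0 => //; rewrite invr_ge0 ltW.
  case: (lerP TR L) => hTL.
    apply: le_trans ha _.
    have TRY : TR <= Y.
      have -> : TR = TR `^ (1 / P) * TR `^ (1 - 1 / P).
        by rewrite -powRD_pos // addrC subrK powRr1 // ltW.
      rewrite /Y ler_wpM2l ?powR_ge0 //.
      apply: ge0_ler_powR => //; last by rewrite nnegrE ltW.
        by rewrite subr_ge0 ler_pdivrMr // mul1r ltW.
      by rewrite nnegrE ltW.
    have -> : L0 * T%:R * c * Rr * (1 + q^-1) = K * TR by rewrite /K /TR; ring.
    apply: le_trans (ler_wpM2l K0 TRY) _.
    rewrite /C -/K; apply: ler_wpM2r => //; lra.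
  have Lpos' : 0 < L by [].
  have lnLTR : ln L <= ln TR by rewrite ler_ln ?posrE // ltW.
  set e1 := (ln TR - ln L) / P.
  have e10 : 0 <= e1 by rewrite /e1 divr_ge0 ?subr_ge0 // ltW.
  set x := expR e1.
  have x1 : 1 <= x by apply: le_trans (expR_ge1Dx e1); rewrite lerDl.
  set D := (Num.truncn x).+1.
  have xD : x <= D%:R := ltW (truncnS_gt x).
  have D0 : 0 < (D%:R : R) by rewrite ltr0n.
  have D2x : D%:R <= 2 * x.
    rewrite /D -addn1 natrD.
    have := truncn_le x; rewrite (le_trans ler01 x1) => h.
    lra.
  apply: le_trans (hb D (ltn0Sn _)) _.
  have lnH : ln (1 + L0 * T%:R) <= 2 * L.
    have <- : ln (T%:R ^+ 2) = 2 * L by rewrite lnXn // mulr_natl.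
    have T1 : 1 <= (T%:R : R) by rewrite ler1n; apply: leq_trans T2.
    rewrite ler_ln ?posrE ?exprn_gt0 //; last by rewrite ltr_pwDl ?ltr01 // mulr_ge0 // ltW.
    rewrite expr2; nra.
  have xL : x * L = Y.
    have -> : x * L = expR (e1 + ln L) by rewrite expRD lnK // posrE.
    rewrite /Y !powR_exp // -expRD; congr expR; rewrite /e1; field; by rewrite gt_eqF.
  have xq : TR * expR (- q * e1) = Y.
    have -> : TR * expR (- q * e1) = expR (ln TR + - q * e1) by rewrite expRD lnK // posrE.
    rewrite /Y !powR_exp // -expRD; congr expR; rewrite /e1 /q; field; by rewrite gt_eqF.
  have part1 : D%:R * ln (1 + L0 * T%:R) <= 4 * Y.
    rewrite -xL; apply: le_trans (ler_pM (ltW D0) _ D2x lnH) _.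
      by apply: ln_ge0; rewrite lerDl mulr_ge0 // ltW.
    by apply: eqle; ring.
  have part2 : L0 * T%:R * c * Rr * (D%:R `^ (- q) / q) <= L0 * c * q^-1 * Y.
    have hDq : D%:R `^ (-q) <= expR (- q * e1).
      rewrite powR_exp // ler_expR !mulNr lerN2 ler_pM2l // -(expRK e1).
      by rewrite ler_ln ?posrE ?expR_gt0.
    apply: le_trans (ler_wpM2l A0 (ler_wpM2r _ hDq)) _; first by rewrite invr_ge0 ltW.
    rewrite -xq; apply: eqle; rewrite /TR; ring.
  apply: le_trans (lerD part1 part2) _.
  have Lc : 0 <= L0 * c by rewrite mulr_ge0 // ltW.
  have M0 : 0 <= L0 * c * q^-1 by rewrite mulr_ge0 // invr_ge0 ltW.
  have -> : 4 * Y + L0 * c * q^-1 * Y = (4 + L0 * c * q^-1) * Y by ring.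
  apply: ler_wpM2r => //.
  have -> : C = 4 + L0 * c + L0 * c * q^-1 by rewrite /C; ring.
  move: Lc M0; move: (L0 * c) (L0 * c * q^-1) => u v; lra.
set E := [set info_gain k lambda zs | zs in
        [set zs : 'I_T -> 'rV[R]_d | injective zs /\ forall i, hypercube a rho (zs i)]].
have ub : ubound E (C * Y).
  move=> _ [zs [_ hz] <-].
  have -> : C * Y = 2^-1 * (2 * C * Y) by rewrite !mulrA mulVf ?mul1r // pnatr_eq0.
  apply: info_le => //; first by move=> i j; apply: mconv.
  exact: key.
rewrite /max_info_gain -/E.
have [ne|e0] := pselect (E !=set0); first exact: ge_sup.
have -> : E = set0 by apply/seteqP; split => x // Ex; apply: e0; exists x.
by rewrite sup0 mulr_ge0.
Qed.
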